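(* Let $D$ be a reduced knot diagram, let $2\le k\le\infty$, and let $\boldsymbol\ell$ be a null pattern of the game matrix $M$ of some version of the $k$-color region select game on $D$. Then there exists $s\in\mathbb{Z}_k$ such that $\sigma_{\boldsymbol\ell}(e)\in\{s,-s\}$ for every edge $e$ of $D$. Moreover, let $e_1,e_2$ be any two edges that meet at a common vertex and are not incident to a common region. Then $\sigma_{\boldsymbol\ell}(e_1)=s$ if and only if $\sigma_{\boldsymbol\ell}(e_2)=-s$.
   Context: Diagrams: a link (knot) diagram $D$ is the underlying graph of a regular projection of a link (knot) into $S^2$. Its vertices are the crossings, each of valence 4, and over/under information is ignored. Components without crossings are closed loops, each regarded as one edge with no vertices. Regions of $D$ are the connected components of $S^2\setminus D$. A vertex or edge is incident to a region if it lies in the boundary of that region. Two regions are adjacent if they are incident to a common edge. A vertex $v$ is reducible if some circle in $S^2$ meets $D$ transversely only at $v$, and irreducible otherwise. An irreducible vertex is incident to four distinct regions. A reducible vertex $v$ is incident to exactly three regions $r_0,r_1,r_2$, where $r_0$ touches $v$ from two sides and $r_1,r_2$ touch it from one side. A knot diagram with $n$ vertices has $n+2$ regions. A knot diagram is reduced if all its vertices are irreducible. Ring: for an integer $k\ge2$ let $\mathbb{Z}_k=\mathbb{Z}/k\mathbb{Z}$, and for $k=\infty$ let $\mathbb{Z}_\infty=\mathbb{Z}$. Game versions: a version of the $k$-color region select game on $D$ is a choice of an increment number $a(v,r)\in\mathbb{Z}_k$ for every incident vertex–region pair, subject to the following rules. - If $k<\infty$ and $v$ is irreducible, then $a(v,r)=a_v$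 is the same for all regions $r$ incident to $v$, and $a_v$ is not a zero divisor of $\mathbb{Z}_k$. - If $k<\infty$ and $v$ is reducible, then $a(v,r_0)$ is arbitrary, while $a(v,r_1)$ and $a(v,r_2)$ are not zero divisors. - If $k=\infty$, then $a(v,r)=1$, except that $a(v,r_0)\in\mathbb{Z}$ is arbitrary when $v$ is reducible. - The original game is the version in which all increment numbers equal $1$. Game matrix: enumerate the vertices as $v_1,\dots,v_n$ and the regions as $r_1,\dots,r_m$. The game matrix is the $n\times m$ matrix $M$ over $\mathbb{Z}_k$ with $M_{ij}=a(v_i,r_j)$ if $v_i$ is incident to $r_j$, and $M_{ij}=0$ otherwise. Patterns and configurations: a push pattern is a vector $\mathbf p\in\mathbb{Z}_k^m$, and $\mathbf p(r_j)=p_j$ is the number of times $r_j$ is pushed. A region $r$ is not pushed in $\mathbf p$ if $\mathbf p(r)=0$. A color configuration is a vector $\mathbf c\in\mathbb{Z}_k^n$. Applying $\mathbf p$ to $\mathbf c$ yields $\mathbf c+M\mathbf p$. The configuration $\mathbf c$ is solvable if some $\mathbf p$ satisfies $M\mathbf p=-\mathbf c$; such a $\mathbf p$ is a solving pattern for $\mathbf c$. $D$ is always solvable in the version if every $\mathbf c\in\mathbb{Z}_k^n$ is solvable. A null pattern is an element of $Ker_k(M)=\{\mathbf p\in\mathbb{Z}_k^m: M\mathbf p=0\}$. Push number: for a push pattern $\mathbf p$ and an edge $e$ incident to regions $r,r'$, the push number of $e$ is $\sigma_{\mathbf p}(e)=\mathbf p(r)+\mathbf p(r')\in\mathbb{Z}_k$.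 *)

(* Defs.v *)
From HB Require Import structures.
From mathcomp Require Import all_boot all_order all_fingroup all_algebra.
Set Implicit Arguments. Unset Strict Implicit. Unset Printing Implicit Defensive.
Import GRing.Theory.
Local Open Scope ring_scope.

(* A diagram with at least one crossing is encoded as a combinatorial map
   (rotation system) on a finite set T of darts (half-edges):
   - [sig] rotates the darts cyclically around their vertex (crossing);
   - [alp] is the fixed-point-free involution pairing the two darts of an edge;
   - regions (faces) are the orbits of [d |-> sig (alp d)].
   Dart d corresponds to the corner at its vertex between sig^-1 d and d, and
   this corner lies in the region (face orbit) containing d. *)

Definition orbit_set (T : finType) (f : T -> T) (x : T) : {set T} :=
  [set y | fconnect f x y].
Definition orbits (T : finType) (f : T -> T) : {set {set T}} :=
  [set orbit_set f x | x : T].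

Section Diagram.
Variable T : finType.
Variables (sig alp : {perm T}).

Definition face_step (d : T) : T := sig (alp d).
(* straight-ahead continuation of a strand through the next crossing *)
Definition strand_step (d : T) : T := sig (sig (alp d)).

Definition vertices : {set {set T}} := orbits sig.
Definition edges : {set {set T}} := orbits alp.
Definition regions : {set {set T}} := orbits face_step.
Definition region_of (d : T) : {set T} := orbit_set face_step d.

Definition is_knot_diagram : Prop :=
  [/\ (forall d, alp (alp d) = d /\ alp d != d),
      (forall d, #|orbit_set sig d| = 4%N),
      (forall x y, connect (fun a b => (b == sig a) || (b == alp a)) x y),
      (* spherical (genus 0): V - E + F = 2 *)
      (#|vertices| + #|regions| = #|edges| + 2)%N &
      (* a single component: the straight-ahead walk has exactly two orbits
         (the two orientations of the one strand) *)
      #|orbits strand_step| = 2%N].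

Definition incident_vr (v r : {set T}) : bool := ~~ [disjoint v & r].
Definition incident_er (e r : {set T}) : bool := ~~ [disjoint e & r].

(* A vertex is irreducible iff it is incident to four distinct regions,
   i.e. its four corners lie in pairwise distinct regions. *)
Definition irreducible (v : {set T}) : bool :=
  [forall d in v, forall d' in v, (d != d') ==> (region_of d != region_of d')].

Definition reduced : Prop := forall v, v \in vertices -> irreducible v.

(* number of sides from which region r touches vertex v *)
Definition touch (v r : {set T}) : nat := #|v :&: r|.

Section Game.
Variable R : pzRingType.

Definition not_zero_divisor (x : R) : Prop := forall y : R, x * y = 0 -> y = 0.

(* versions of the k-color game, k finite (R = Z_k) *)
Definition finite_version (a : {set T} -> {set T} -> R) : Prop :=
  forall v, v \in vertices ->
    (irreducible v -> exists c, not_zero_divisor c /\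
        forall r, r \in regions -> incident_vr v r -> a v r = c) /\
    (~~ irreducible v -> forall r, r \in regions -> incident_vr v r ->
        touch v r = 1%N -> not_zero_divisor (a v r)).

(* versions for k = infinity (R = Z) *)
Definition infinite_version (a : {set T} -> {set T} -> R) : Prop :=
  forall v, v \in vertices -> forall r, r \in regions -> incident_vr v r ->
    irreducible v || (touch v r == 1%N) -> a v r = 1.

(* game matrix entries, rows = vertices, columns = regions *)
Definition game_matrix (a : {set T} -> {set T} -> R) (v r : {set T}) : R :=
  if incident_vr v r then a v r else 0.

(* push patterns are functions on regions (values elsewhere are irrelevant) *)
Definition null_pattern (a : {set T} -> {set T} -> R) (p : {set T} -> R) : Prop :=
  forall v, v \in vertices -> \sum_(r in regions) game_matrix a v r * p r = 0.

(* push number of an edge e = {d, alp d}: p(region of d) + p(region of alp d),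
   i.e. the sum of p over the two regions on the two sides of e *)
Definition push_number (p : {set T} -> R) (e : {set T}) : R :=
  \sum_(d in e) p (region_of d).

Definition meet_at_vertex (e1 e2 : {set T}) : Prop :=
  exists v, v \in vertices /\ ~~ [disjoint v & e1] /\ ~~ [disjoint v & e2].

Definition common_region (e1 e2 : {set T}) : Prop :=
  exists r, r \in regions /\ incident_er e1 r /\ incident_er e2 r.

Definition push_conclusion (p : {set T} -> R) : Prop :=
  exists s : R,
    (forall e, e \in edges -> push_number p e = s \/ push_number p e = - s) /\
    (forall e1 e2, e1 \in edges -> e2 \in edges ->
       meet_at_vertex e1 e2 -> ~ common_region e1 e2 ->
       (push_number p e1 = s <-> push_number p e2 = - s)).

End Game.
End Diagram.

(* Main.v *)
Require Import Defs.
From mathcomp Require Import all_boot all_order all_fingroup all_algebra.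
Set Implicit Arguments. Unset Strict Implicit. Unset Printing Implicit Defensive.
Import GRing.Theory.
Local Open Scope ring_scope.

Section S.
Variable T : finType.
Variables sig alp : {perm T}.

Lemma disjW (A B : {set T}) u : u \in A -> u \in B -> ~~ [disjoint A & B].
Proof. by move=> h1 h2; apply/negP => /disjointFr/(_ h1); rewrite h2. Qed.

Lemma notdisj (A B : {set T}) : ~~ [disjoint A & B] -> exists x, x \in A /\ x \in B.
Proof. by rewrite -setI_eq0 => /set0Pn [x]; rewrite inE => /andP[]; exists x. Qed.

Lemma iter_mod (f : T -> T) x m n : iter m f x = x -> iter n f x = iter (n %% m)%N f x.
Proof.
move=> Hm; rewrite {1}(divn_eq n m) addnC iterD; congr (iter _ f _).
by elim: (n %/ m)%N => [|q IH] //=; rewrite mulSn iterD IH Hm.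
Qed.

Lemma fconnect_traj (f : T -> T) x m y : (0 < m)%N -> iter m f x = x ->
  fconnect f x y = (y \in traject f x m).
Proof.
move=> m0 Hm; apply/idP/idP.
  move=> /iter_findex <-; rewrite (iter_mod _ Hm); apply/trajectP.
  by exists (findex f x y %% m)%N => //; rewrite ltn_mod.
by move=> /trajectP [i _ ->]; apply: fconnect_iter.
Qed.

Hypothesis Halp : forall d, alp (alp d) = d /\ alp d != d.
Hypothesis Hsig : forall d, #|orbit_set sig d| = 4%N.

Lemma order_sig d : fingraph.order sig d = 4%N.
Proof. by rewrite -(Hsig d) /fingraph.order /orbit_set cardsE. Qed.

Lemma sig4 d : sig (sig (sig (sig d))) = d.
Proof. by have := iter_order (@perm_inj _ sig) d; rewrite order_sig. Qed.

Lemma sig_uniq d : uniq [:: d; sig d; sig (sig d); sig (sig (sig d))].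
Proof. by have := orbit_uniq sig d; rewrite /fingraph.orbit order_sig. Qed.

Lemma in_vert d y : (y \in orbit_set sig d) =
  (y \in [:: d; sig d; sig (sig d); sig (sig (sig d))]).
Proof. by rewrite inE (@fconnect_traj _ _ 4) //; apply: sig4. Qed.

Lemma in_edge d y : (y \in orbit_set alp d) = (y \in [:: d; alp d]).
Proof. by rewrite inE (@fconnect_traj _ _ 2) //=; case: (Halp d). Qed.


Local Notation R := (region_of sig alp).
Local Notation st := (strand_step sig alp).

Lemma face_inj : injective (face_step sig alp).
Proof. exact: inj_comp (@perm_inj _ sig) (@perm_inj _ alp). Qed.

Lemma reg_alp x : R (alp x) = R (sig x).
Proof.
apply/setP => y; rewrite !inE (same_fconnect1 face_inj (alp x)).
by rewrite /face_step (Halp x).1.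
Qed.

Lemma reg_sigalp x : R (sig (alp x)) = R x.
Proof. by apply/setP => y; rewrite !inE (same_fconnect1 face_inj x). Qed.

Lemma push_edge (K : pzRingType) (l : {set T} -> K) x :
  push_number sig alp l (orbit_set alp x) = l (R x) + l (R (sig x)).
Proof.
rewrite /push_number.
have -> : \sum_(d in orbit_set alp x) l (R d) = \sum_(d in [:: x; alp x]) l (R d).
  by apply: eq_bigl => y; rewrite in_edge.
rewrite -big_uniq; last by rewrite /= inE eq_sym (Halp x).2.
by rewrite !big_cons big_nil reg_alp /= addr0.
Qed.

Lemma st_alp y : st (alp (st y)) = alp y.
Proof. by rewrite /strand_step (Halp _).1 sig4. Qed.

Lemma st_not d : ~~ fconnect st d (alp d).
Proof.
apply/negP => /iter_findex; set j := findex _ _ _ => Hj.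
have key : forall i k, (i + k = j)%N -> iter i st d = alp (iter k st d).
  elim=> [|i IH] k /=.
    by rewrite add0n => ->; rewrite Hj (Halp d).1.
  move=> Hik; rewrite (IH k.+1) ?addnS // iterS st_alp //.
have := odd_double_half j; set h := j./2; case: (odd j) => /= Hj2.
  have E : iter h.+1 st d = alp (iter h st d).
    by apply: key; rewrite -Hj2 -addnn addSn add1n.
  have E2 : sig (sig (iter h.+1 st d)) = iter h.+1 st d.
    by rewrite [in RHS]iterS /strand_step -E.
  have := sig_uniq (iter h.+1 st d); rewrite /= !inE E2 eqxx.
  by rewrite !orbT.
have E : iter h st d = alp (iter h st d).
  by apply: key; rewrite -Hj2 -addnn.
by have := (Halp (iter h st d)).2; rewrite -E eqxx.
Qed.


Hypothesis Hst : #|orbits st| = 2%N.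

Lemma cover d x : fconnect st d x || fconnect st (alp d) x.
Proof.
apply/negPn/negP; rewrite negb_or => /andP[n1 n2].
set O := orbit_set st.
have inO y : y \in O y by rewrite inE connect0.
have inorb y : O y \in orbits st by apply/imsetP; exists y.
have d1 : O d != O (alp d).
  by apply/eqP => E; have := inO (alp d); rewrite -E inE (negbTE (st_not d)).
have d2 : O x != O d by apply/eqP => E; have := inO x; rewrite E inE (negbTE n1).
have d3 : O x != O (alp d).
  by apply/eqP => E; have := inO x; rewrite E inE (negbTE n2).
have sub : [set O x; O d; O (alp d)] \subset orbits st.
  by apply/subsetP => y; rewrite !inE => /orP[/orP[]|] /eqP ->.
have := subset_leq_card sub; rewrite Hst setUC cardsU1 cards2 !inE d2 negb_or eq_sym d3 eq_sym d1.
by [].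
Qed.

Section Core.
Variable K : pzRingType.
Variable l : {set T} -> K.
Hypothesis HV : forall x,
  l (R x) + l (R (sig x)) + l (R (sig (sig x))) + l (R (sig (sig (sig x)))) = 0.

Let F x := l (R x) + l (R (sig x)).

Lemma F_alp x : F (alp x) = F x.
Proof. by rewrite /F reg_alp reg_sigalp addrC. Qed.

Lemma F_sig2 x : F (sig (sig x)) = - F x.
Proof.
apply/eqP; rewrite -addr_eq0 addrC /F addrA; apply/eqP; exact: HV.
Qed.

Lemma F_st x : F (st x) = - F x.
Proof. by rewrite /strand_step F_sig2 F_alp. Qed.

Lemma F_orbit z y : fconnect st z y -> F y = F z \/ F y = - F z.
Proof.
move=> /iter_findex <-; elim: (findex _ _ _) => [|n IH]; first by left.
rewrite iterS F_st; case: IH => ->; [right|left] => //; exact: opprK.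
Qed.

Lemma core : push_conclusion sig alp l.
Proof.
case: (pickP (fun _ : T => true)) => [d0 _ | none]; last first.
  exists 0; split=> [e /imsetP [x]|e1 e2 /imsetP [x]]; by have := none x.
exists (F d0); split.
  move=> e /imsetP [x _ ->]; rewrite push_edge -/(F x).
  case/orP: (cover d0 x) => /F_orbit //; rewrite F_alp //.
move=> e1 e2 /imsetP [w1 _ ->] /imsetP [w2 _ ->] [v [/imsetP [z _ ->] [i1 i2]]] Hnc.
have [x [xv xe]] := notdisj i1; have [y [yv ye]] := notdisj i2.
have Ee : forall w u, u \in orbit_set alp w -> orbit_set alp w = orbit_set alp u.
  move=> w u; rewrite in_edge !inE => /orP[] /eqP ->; first by [].
  apply/setP => t; rewrite !in_edge !inE (Halp w).1 orbC //.
rewrite (Ee _ _ xe) (Ee _ _ ye) in Hnc *; rewrite !push_edge -/(F x) -/(F y).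
have Ev : orbit_set sig z = orbit_set sig x.
  apply/setP => t; rewrite !inE; apply: same_connect => //.
    exact: fconnect_sym (@perm_inj _ sig).
  by move: xv; rewrite inE.
have cr : forall u u1 u2, u1 \in orbit_set alp x -> u1 \in R u ->
    u2 \in orbit_set alp y -> u2 \in R u -> False.
  move=> u u1 u2 h1 h2 h3 h4; apply: Hnc; exists (R u); split.
    by apply/imsetP; exists u.
  by split; apply: disjW; eauto.
have inR u : u \in R u by rewrite inE connect0.
have inE1 u : u \in orbit_set alp u by rewrite in_edge !inE eqxx.
have inE2 u : alp u \in orbit_set alp u by rewrite in_edge !inE eqxx orbT.
move: yv; rewrite Ev in_vert !inE => /or4P [] /eqP Ey.
- by exfalso; apply: (cr x x x); rewrite // -Ey.
- exfalso; apply: (cr (sig x) (alp x) y) => //; first by rewrite -reg_alp.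
  by rewrite -Ey.
- by rewrite Ey F_sig2; split => [->|/oppr_inj].
- exfalso; apply: (cr x x (alp y)) => //.
  have -> : x = sig y by rewrite Ey sig4.
  by rewrite -reg_alp.
Qed.
End Core.


Lemma reg_eq w u : u \in R w -> R w = R u.
Proof.
move=> h; apply/setP => t; rewrite !inE; apply: same_connect => //.
  exact: fconnect_sym face_inj.
by move: h; rewrite inE.
Qed.

Lemma vsum (K : pzRingType) (a : {set T} -> {set T} -> K) (l : {set T} -> K) :
  reduced sig alp -> null_pattern sig alp a l ->
  (forall x, exists c, not_zero_divisor c /\
     forall y, y \in orbit_set sig x -> a (orbit_set sig x) (R y) = c) ->
  forall x,
  l (R x) + l (R (sig x)) + l (R (sig (sig x))) + l (R (sig (sig (sig x)))) = 0.
Proof.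
move=> Hred Hnull Ha x; set v := orbit_set sig x.
have vV : v \in vertices sig by apply/imsetP; exists x.
have inR u : u \in R u by rewrite inE connect0.
have regR u : R u \in regions sig alp by apply/imsetP; exists u.
have := Hnull v vV.
have -> : \sum_(r in regions sig alp) game_matrix a v r * l r =
          \sum_(r in R @: v) a v r * l r.
  rewrite big_mkcond [X in _ = X]big_mkcond; apply: eq_bigr => r _.
  case: ifP => h1; case: ifP => rv.
  - case/imsetP: rv => u uv Er; rewrite /game_matrix ifT // Er.
    exact: disjW uv (inR u).
  - case/imsetP: h1 => w _ Ew.
    rewrite /game_matrix; case: ifP; last by rewrite mul0r.
    move=> /notdisj [u [uv uw]]; move: uw rv; rewrite Ew /= => uw.
    by move: (reg_eq uw); rewrite /region_of => ->; rewrite (imset_f _ uv).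
  - by case/imsetP: rv => u uv Er; rewrite Er regR in h1.
  - by [].
rewrite big_imset; last first.
  move=> u1 u2 h1 h2 E; have := Hred v vV.
  move/forall_inP/(_ u1 h1)/forall_inP/(_ u2 h2)/implyP.
  by case: (eqVneq u1 u2) => // ne /(_ isT); rewrite E eqxx.
have [c [nzc Hc]] := Ha x.
rewrite (eq_bigr (fun u => c * l (R u))); last by move=> u uv; rewrite Hc.
rewrite -mulr_sumr => /nzc.
have -> : \sum_(u in v) l (R u) =
   \sum_(u in [:: x; sig x; sig (sig x); sig (sig (sig x))]) l (R u).
  by apply: eq_bigl => u; rewrite in_vert.
rewrite -big_uniq ?sig_uniq // !big_cons big_nil /=.
by rewrite addr0 !addrA.
Qed.

End S.


Theorem mainTheorem4 (T : finType) (sig alp : {perm T}) :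
  is_knot_diagram sig alp -> reduced sig alp ->
  (forall (k : nat) (a : {set T} -> {set T} -> 'Z_k) (l : {set T} -> 'Z_k),
      (1 < k)%N -> finite_version sig alp a -> null_pattern sig alp a l ->
      push_conclusion sig alp l) /\
  (forall (a : {set T} -> {set T} -> int) (l : {set T} -> int),
      infinite_version sig alp a -> null_pattern sig alp a l ->
      push_conclusion sig alp l).
Proof.
move=> [Halp Hsig _ _ Hst] Hred.
have inR u : u \in region_of sig alp u by rewrite inE connect0.
have regR u : region_of sig alp u \in regions sig alp by apply/imsetP; exists u.
split.
  move=> k a l _ Hfin Hnull; apply: (core Halp Hsig Hst).
  apply: (vsum Hsig Hred Hnull) => x.
  have vV : orbit_set sig x \in vertices sig by apply/imsetP; exists x.
  have [c [nzc Hc]] := (Hfin _ vV).1 (Hred _ vV).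
  exists c; split => // y yv; apply: Hc => //.
  exact: disjW yv (inR y).
move=> a l Hinf Hnull; apply: (core Halp Hsig Hst).
apply: (vsum Hsig Hred Hnull) => x.
have vV : orbit_set sig x \in vertices sig by apply/imsetP; exists x.
exists 1; split; first by move=> y; rewrite mul1r.
move=> y yv; apply: Hinf => //; first exact: disjW yv (inR y).
by rewrite Hred.
Qed.
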